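(* Let $N\ge2$ and let $(\vartheta_i(t))_{i=1}^N$, $t\ge0$, $\vartheta_i(t)\in\mathbb R$, be a solution of $$\dot\vartheta_i(t)=-\frac1N\sum_{j=1}^N\sin(\vartheta_i(t)-\vartheta_j(t)),\qquad i=1,\dots,N,$$ which is not a stationary solution. Then each $\vartheta_j(t)$ converges to a finite limit $\vartheta_j^*$ as $t\to\infty$, and $(\vartheta_j^* )_{j=1}^N$ is a stationary configuration of type $(N-k,k)$ for some integer $0\le k<N/2$ (complete frequency synchronization). Moreover, if $\vartheta_i(0)\neq\vartheta_j(0)\pmod{2\pi}$ for all $i\neq j$, then the limit configuration is of type $(N,0)$ or $(N-1,1)$, i.e. $k\in\{0,1\}$.
   Context: The order parameters are defined by $R e^{\mathrm{i}\varphi}=\frac1N\sum_{j}e^{\mathrm{i}\vartheta_j}$. A stationary solution is a solution constant in time (mod $2\pi$). A configuration $(\vartheta_j^* )_{j=1}^N$ is of type $(N-k,k)$, $0\le k<N/2$, if there exist $\varphi^*\in\mathbb R$ and $I\subseteq\{1,\dots,N\}$ with $|I|=N-k$ such that $\vartheta_i^*=\varphi^*\pmod{2\pi}$ for $i\in I$ and $\vartheta_i^*=\varphi^*+\pi\pmod{2\pi}$ for $i\notin I$. Type $(N,0)$ is complete phase synchronization. *)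

(* Defs.v *)
From Stdlib Require Import Reals Lra Lia ZArith List.
Open Scope R_scope.

(* Oscillators are indexed by 0 .. N-1. *)

Definition kur_rhs (N : nat) (th : nat -> R) (i : nat) : R :=
  - (1 / INR N) * sum_f_R0 (fun j => sin (th i - th j)) (N - 1).

(* theta is a solution on [0, +oo): differentiable on (0,+oo) satisfying
   the ODE there, and right-continuous at t = 0 (values for t < 0 are
   irrelevant). *)
Definition is_solution (N : nat) (theta : nat -> R -> R) : Prop :=
  (forall i, (i < N)%nat -> forall t, 0 < t ->
     derivable_pt_lim (theta i) t (kur_rhs N (fun j => theta j t) i)) /\
  (forall i, (i < N)%nat -> forall eps, 0 < eps -> exists delta, 0 < delta /\
     forall t, 0 <= t < delta -> Rabs (theta i t - theta i 0) < eps).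

Definition eq_mod2pi (x y : R) : Prop := exists m : Z, x = y + 2 * PI * IZR m.

Definition is_stationary_solution (N : nat) (theta : nat -> R -> R) : Prop :=
  forall i, (i < N)%nat -> forall t, 0 <= t -> eq_mod2pi (theta i t) (theta i 0).

Definition is_stationary_config (N : nat) (th : nat -> R) : Prop :=
  forall i, (i < N)%nat -> kur_rhs N th i = 0.

Definition is_type (N k : nat) (th : nat -> R) : Prop :=
  (2 * k < N)%nat /\
  exists (phi : R) (I : list nat),
    NoDup I /\ (forall i, In i I -> (i < N)%nat) /\ length I = (N - k)%nat /\
    forall i, (i < N)%nat ->
      (In i I -> eq_mod2pi (th i) phi) /\
      (~ In i I -> eq_mod2pi (th i) (phi + PI)).

Definition converges_to (f : R -> R) (l : R) : Prop :=
  forall eps, 0 < eps -> exists T, forall t, T <= t -> Rabs (f t - l) < eps.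

(* Main.v *)
Require Import Defs.
From Stdlib Require Import Reals Lra Lia ZArith List Classical ClassicalEpsilon.
Open Scope R_scope.

Notation dpl := derivable_pt_lim.

Lemma dl_ext (f g : R -> R) x l : (forall y, f y = g y) -> dpl f x l -> dpl g x l.
Proof.
  intros H H0 eps Heps. destruct (H0 eps Heps) as [d Hd]. exists d.
  intros h Hh Hh2. rewrite <- !H. apply Hd; auto.
Qed.

Lemma dl_plus (f g : R -> R) x a b : dpl f x a -> dpl g x b ->
  dpl (fun y => f y + g y) x (a + b).
Proof. intros. exact (derivable_pt_lim_plus f g x a b H H0). Qed.

Lemma dl_minus (f g : R -> R) x a b : dpl f x a -> dpl g x b ->
  dpl (fun y => f y - g y) x (a - b).
Proof. intros. exact (derivable_pt_lim_minus f g x a b H H0). Qed.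

Lemma dl_mult (f g : R -> R) x a b : dpl f x a -> dpl g x b ->
  dpl (fun y => f y * g y) x (a * g x + f x * b).
Proof. intros. exact (derivable_pt_lim_mult f g x a b H H0). Qed.

Lemma dl_const c x : dpl (fun _ => c) x 0.
Proof. exact (derivable_pt_lim_const c x). Qed.

Lemma dl_id x : dpl (fun y => y) x 1.
Proof. exact (derivable_pt_lim_id x). Qed.

Lemma dl_scal (f : R -> R) c x a : dpl f x a -> dpl (fun y => c * f y) x (c * a).
Proof.
  intros. replace (c * a) with (0 * f x + c * a) by ring.
  apply dl_mult; auto. apply dl_const.
Qed.

Lemma dl_sin (f : R -> R) x a : dpl f x a -> dpl (fun y => sin (f y)) x (cos (f x) * a).
Proof. intros. exact (derivable_pt_lim_comp f sin x a (cos (f x)) H (derivable_pt_lim_sin _)). Qed.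

Lemma dl_cos (f : R -> R) x a : dpl f x a -> dpl (fun y => cos (f y)) x (- sin (f x) * a).
Proof. intros. exact (derivable_pt_lim_comp f cos x a _ H (derivable_pt_lim_cos _)). Qed.

Lemma dl_exp (f : R -> R) x a : dpl f x a -> dpl (fun y => exp (f y)) x (exp (f x) * a).
Proof. intros. exact (derivable_pt_lim_comp f exp x a _ H (derivable_pt_lim_exp _)). Qed.

Lemma dl_sqrt (f : R -> R) x a : 0 < f x -> dpl f x a ->
  dpl (fun y => sqrt (f y)) x (/ (2 * sqrt (f x)) * a).
Proof. intros. exact (derivable_pt_lim_comp f sqrt x a _ H0 (derivable_pt_lim_sqrt _ H)). Qed.

Lemma dl_sum (f : nat -> R -> R) (f' : nat -> R) x n :
  (forall j, (j <= n)%nat -> dpl (f j) x (f' j)) ->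
  dpl (fun y => sum_f_R0 (fun j => f j y) n) x (sum_f_R0 f' n).
Proof.
  induction n; intros H; simpl.
  - apply H; lia.
  - apply dl_plus. apply IHn; intros; apply H; lia. apply H; lia.
Qed.

Lemma dl_eq (f : R -> R) x l l' : l = l' -> dpl f x l -> dpl f x l'.
Proof. intros ->; auto. Qed.

Lemma mono_dec (f f' : R -> R) a :
  (forall t, a < t -> dpl f t (f' t)) -> (forall t, a < t -> f' t <= 0) ->
  forall x y, a < x -> x <= y -> f y <= f x.
Proof.
  intros Hd Hn x y Hx Hxy. destruct (Rle_lt_or_eq_dec _ _ Hxy) as [H|H].
  - destruct (MVT_cor2 f f' x y H) as [c [Hc1 Hc2]].
    + intros c Hc. apply Hd. lra.
    + assert (f' c <= 0) by (apply Hn; lra). nra.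
  - subst; lra.
Qed.

Lemma mono_inc (f f' : R -> R) a :
  (forall t, a < t -> dpl f t (f' t)) -> (forall t, a < t -> 0 <= f' t) ->
  forall x y, a < x -> x <= y -> f x <= f y.
Proof.
  intros Hd Hn x y Hx Hxy.
  assert (- f y <= - f x); [|lra].
  apply (mono_dec (fun t => - f t) (fun t => - f' t) a); auto.
  - intros t Ht. replace (- f' t) with (0 - f' t) by ring.
    apply (dl_ext (fun y => 0 - f y)). intros; ring.
    apply (dl_minus (fun _ => 0) f). apply dl_const. auto.
  - intros t Ht. specialize (Hn t Ht). lra.
Qed.

Lemma sum_lin (f g : nat -> R) a b n :
  sum_f_R0 (fun j => a * f j + b * g j) n = a * sum_f_R0 f n + b * sum_f_R0 g n.
Proof. induction n; simpl; [ring| rewrite IHn; ring]. Qed.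

Lemma sum_term_le (f : nat -> R) n j : (forall i, 0 <= f i) -> (j <= n)%nat ->
  f j <= sum_f_R0 f n.
Proof.
  intros Hp. induction n; intros Hj.
  - replace j with 0%nat by lia. simpl; lra.
  - simpl. destruct (Nat.eq_dec j (S n)) as [->|Hne].
    + assert (0 <= sum_f_R0 f n) by (apply cond_pos_sum; auto). lra.
    + assert (f j <= sum_f_R0 f n) by (apply IHn; lia). specialize (Hp (S n)). lra.
Qed.

Lemma sum_abs_le (f : nat -> R) n : (forall i, Rabs (f i) <= 1) ->
  Rabs (sum_f_R0 f n) <= INR (S n).
Proof.
  intros H. induction n; simpl sum_f_R0.
  - simpl. apply H.
  - rewrite S_INR. eapply Rle_trans. apply Rabs_triang. specialize (H (S n)). lra.
Qed.

Lemma sin_lip a b : Rabs (sin a - sin b) <= Rabs (a - b).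
Proof.
  destruct (Rtotal_order a b) as [H|[H|H]].
  - destruct (MVT_cor2 sin cos a b H) as [c [Hc _]].
    + intros; apply derivable_pt_lim_sin.
    + replace (sin a - sin b) with (- (cos c * (b - a))) by lra.
      rewrite Rabs_Ropp, Rabs_mult. replace (Rabs (a - b)) with (1 * Rabs (b - a)).
      apply Rmult_le_compat_r. apply Rabs_pos. apply Rabs_le. apply COS_bound.
      rewrite Rmult_1_l, <- Rabs_Ropp. f_equal; ring.
  - subst. replace (b - b) with 0 by ring. replace (sin b - sin b) with 0 by ring. lra.
  - destruct (MVT_cor2 sin cos b a H) as [c [Hc _]].
    + intros; apply derivable_pt_lim_sin.
    + rewrite Hc. rewrite Rabs_mult. rewrite <- (Rmult_1_l (Rabs (a - b))) at 2.
      apply Rmult_le_compat_r. apply Rabs_pos. apply Rabs_le. apply COS_bound.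
Qed.

Lemma cos_lip a b : Rabs (cos a - cos b) <= Rabs (a - b).
Proof.
  rewrite <- (sin_shift a), <- (sin_shift b).
  eapply Rle_trans. apply sin_lip. right. rewrite Rabs_minus_sym. f_equal. ring.
Qed.

Lemma conv_const c : converges_to (fun _ => c) c.
Proof. intros e He. exists 0. intros. replace (c - c) with 0 by ring. rewrite Rabs_R0. lra. Qed.

Lemma conv_plus f g a b : converges_to f a -> converges_to g b ->
  converges_to (fun t => f t + g t) (a + b).
Proof.
  intros Hf Hg e He. destruct (Hf (e/2)) as [T1 H1]; [lra|].
  destruct (Hg (e/2)) as [T2 H2]; [lra|]. exists (Rmax T1 T2). intros t Ht.
  specialize (H1 t (Rle_trans _ _ _ (Rmax_l _ _) Ht)).
  specialize (H2 t (Rle_trans _ _ _ (Rmax_r _ _) Ht)).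
  replace (f t + g t - (a + b)) with ((f t - a) + (g t - b)) by ring.
  eapply Rle_lt_trans. apply Rabs_triang. lra.
Qed.

Lemma conv_scal f c a : converges_to f a -> converges_to (fun t => c * f t) (c * a).
Proof.
  intros Hf e He. destruct (Hf (e / (Rabs c + 1))) as [T H].
  { apply Rdiv_lt_0_compat; auto. pose proof (Rabs_pos c); lra. }
  exists T. intros t Ht. specialize (H t Ht).
  replace (c * f t - c * a) with (c * (f t - a)) by ring. rewrite Rabs_mult.
  pose proof (Rabs_pos c). pose proof (Rabs_pos (f t - a)).
  apply Rmult_lt_compat_l with (r := Rabs c + 1) in H; [|lra].
  replace ((Rabs c + 1) * (e / (Rabs c + 1))) with e in H by (field; lra). nra.
Qed.

Lemma conv_minus f g a b : converges_to f a -> converges_to g b ->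
  converges_to (fun t => f t - g t) (a - b).
Proof.
  intros Hf Hg. replace (a - b) with (a + (-1) * b) by ring.
  intros e He. destruct (conv_plus f (fun t => -1 * g t) a (-1 * b) Hf (conv_scal g (-1) b Hg) e He)
    as [T H]. exists T. intros t Ht. specialize (H t Ht).
  replace (f t - g t) with (f t + -1 * g t) by ring. auto.
Qed.

Lemma conv_mult f g a b : converges_to f a -> converges_to g b ->
  converges_to (fun t => f t * g t) (a * b).
Proof.
  intros Hf Hg e He.
  set (M := Rabs a + Rabs b + 1).
  assert (HM : 0 < M) by (unfold M; pose proof (Rabs_pos a); pose proof (Rabs_pos b); lra).
  set (d := Rmin 1 (e / (2 * M))).
  assert (Hd : 0 < d). { unfold d. apply Rmin_glb_lt. lra. apply Rdiv_lt_0_compat; lra. }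
  destruct (Hf d Hd) as [T1 H1]. destruct (Hg d Hd) as [T2 H2].
  exists (Rmax T1 T2). intros t Ht.
  specialize (H1 t (Rle_trans _ _ _ (Rmax_l _ _) Ht)).
  specialize (H2 t (Rle_trans _ _ _ (Rmax_r _ _) Ht)).
  assert (d <= 1) by apply Rmin_l.
  assert (d <= e / (2 * M)) by apply Rmin_r.
  assert (Hgb : Rabs (g t) <= Rabs b + 1).
  { replace (g t) with ((g t - b) + b) by ring. eapply Rle_trans. apply Rabs_triang. lra. }
  replace (f t * g t - a * b) with ((f t - a) * g t + a * (g t - b)) by ring.
  eapply Rle_lt_trans. apply Rabs_triang. rewrite !Rabs_mult.
  assert (Rabs (f t - a) * Rabs (g t) <= d * M).
  { apply Rmult_le_compat; try apply Rabs_pos; unfold M; try lra. pose proof (Rabs_pos a); lra. }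
  assert (Rabs a * Rabs (g t - b) <= M * d).
  { apply Rmult_le_compat; try apply Rabs_pos; unfold M; try lra.
    pose proof (Rabs_pos b); lra. }
  assert (d * M <= e / 2).
  { apply Rmult_le_compat_r with (r := M) in H0; [|lra].
    replace (e / (2 * M) * M) with (e/2) in H0 by (field; lra). lra. }
  assert (Rabs (f t - a) * Rabs (g t) + Rabs a * Rabs (g t - b) < e \/ d < 1 \/ True) by auto.
  assert (Rabs (f t - a) * Rabs (g t) < d * M).
  { destruct (Req_dec (Rabs (g t)) 0) as [Z|Z].
    - rewrite Z. rewrite Rmult_0_r. nra.
    - apply Rle_lt_trans with (Rabs (f t - a) * M).
      + apply Rmult_le_compat_l. apply Rabs_pos. unfold M; pose proof (Rabs_pos a); lra.
      + apply Rmult_lt_compat_r; auto. }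
  lra.
Qed.

Lemma conv_lip (g : R -> R) f a : (forall x y, Rabs (g x - g y) <= Rabs (x - y)) ->
  converges_to f a -> converges_to (fun t => g (f t)) (g a).
Proof.
  intros Hg Hf e He. destruct (Hf e He) as [T H]. exists T. intros t Ht.
  eapply Rle_lt_trans. apply Hg. auto.
Qed.

Lemma conv_sin f a : converges_to f a -> converges_to (fun t => sin (f t)) (sin a).
Proof. apply conv_lip. apply sin_lip. Qed.
Lemma conv_cos f a : converges_to f a -> converges_to (fun t => cos (f t)) (cos a).
Proof. apply conv_lip. apply cos_lip. Qed.

Lemma conv_ext f g a : (forall t, f t = g t) -> converges_to f a -> converges_to g a.
Proof. intros E H e He. destruct (H e He) as [T HT]. exists T. intros. rewrite <- E. auto. Qed.

Lemma conv_sum (f : nat -> R -> R) (l : nat -> R) n :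
  (forall j, (j <= n)%nat -> converges_to (f j) (l j)) ->
  converges_to (fun t => sum_f_R0 (fun j => f j t) n) (sum_f_R0 l n).
Proof.
  induction n; intros H; simpl.
  - apply H; lia.
  - apply conv_plus. apply IHn. intros; apply H; lia. apply H; lia.
Qed.

Lemma conv_unique f a b : converges_to f a -> converges_to f b -> a = b.
Proof.
  intros Ha Hb. apply Rminus_diag_uniq. destruct (Req_dec (a - b) 0) as [Z|Z]; auto.
  exfalso. pose proof (Rabs_no_R0 _ Z) as Z1. pose proof (Rabs_pos (a - b)) as Z2.
  assert (H : 0 < Rabs (a - b)) by lra. destruct (Ha (Rabs (a - b) / 2)) as [T1 H1]; [lra|].
  destruct (Hb (Rabs (a - b) / 2)) as [T2 H2]; [lra|].
  specialize (H1 (Rmax T1 T2) (Rmax_l _ _)). specialize (H2 (Rmax T1 T2) (Rmax_r _ _)).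
  replace (a - b) with (- (f (Rmax T1 T2) - a) + (f (Rmax T1 T2) - b)) in H by ring.
  pose proof (Rabs_triang (- (f (Rmax T1 T2) - a)) (f (Rmax T1 T2) - b)).
  rewrite Rabs_Ropp in H0.
  replace (- (f (Rmax T1 T2) - a) + (f (Rmax T1 T2) - b)) with (a - b) in * by ring. lra.
Qed.

Lemma nat_above (T : R) : exists n : nat, T <= INR n.
Proof. destruct (INR_unbounded T) as [n Hn]. exists n. lra. Qed.

Lemma cauchy_conv (f : R -> R) :
  (forall e, 0 < e -> exists T, forall t1 t2, T <= t1 -> T <= t2 -> Rabs (f t1 - f t2) < e) ->
  exists l, converges_to f l.
Proof.
  intros Hc.
  assert (Hcc : Cauchy_crit (fun n => f (INR n))).
  { intros e He. destruct (Hc e He) as [T HT]. destruct (nat_above T) as [n0 Hn0].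
    exists n0. intros n m Hn Hm. unfold Rgt in Hn, Hm. unfold R_dist. apply HT.
    - apply Rle_trans with (INR n0); auto. apply le_INR; lia.
    - apply Rle_trans with (INR n0); auto. apply le_INR; lia. }
  destruct (R_complete _ Hcc) as [l Hl]. exists l.
  intros e He. destruct (Hc (e/2)) as [T HT]; [lra|].
  destruct (Hl (e/2)) as [n0 Hn0]; [lra|].
  destruct (nat_above (Rmax T (INR n0))) as [n1 Hn1].
  exists (Rmax T (INR n0)). intros t Ht.
  assert (INR n0 <= INR n1) by (pose proof (Rmax_r T (INR n0)); lra).
  apply INR_le in H.
  specialize (Hn0 n1 ltac:(lia)). unfold R_dist in Hn0.
  specialize (HT t (INR n1) (Rle_trans _ _ _ (Rmax_l _ _) Ht)
     ltac:(pose proof (Rmax_l T (INR n0)); lra)).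
  replace (f t - l) with ((f t - f (INR n1)) + (f (INR n1) - l)) by ring.
  eapply Rle_lt_trans. apply Rabs_triang. lra.
Qed.

Definition Xc N (th : nat -> R) := / INR N * sum_f_R0 (fun j => cos (th j)) (N-1).
Definition Yc N (th : nat -> R) := / INR N * sum_f_R0 (fun j => sin (th j)) (N-1).
Definition uc N th i := Xc N th * cos (th i) + Yc N th * sin (th i).
Definition vc N th i := Yc N th * cos (th i) - Xc N th * sin (th i).
Definition rhoc N th := Xc N th * Xc N th + Yc N th * Yc N th.
Definition Dc N th := sum_f_R0 (fun j => vc N th j * vc N th j) (N-1).

Lemma sc1 x : sin x * sin x + cos x * cos x = 1.
Proof. pose proof (sin2_cos2 x). unfold Rsqr in H. lra. Qed.

Lemma INR_posN N : (1 <= N)%nat -> 0 < INR N.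
Proof. intros. apply lt_0_INR. lia. Qed.

Lemma kur_v N th i : (1 <= N)%nat -> kur_rhs N th i = vc N th i.
Proof.
  intros HN. unfold kur_rhs, vc, Xc, Yc.
  assert (E : sum_f_R0 (fun j => sin (th i - th j)) (N - 1) =
     sin (th i) * sum_f_R0 (fun j => cos (th j)) (N-1) + (- cos (th i)) * sum_f_R0 (fun j => sin (th j)) (N-1)).
  { rewrite <- sum_lin. apply sum_eq. intros. rewrite sin_minus. ring. }
  rewrite E. pose proof (INR_posN N HN). field. lra.
Qed.

Lemma uv_sq N th i : uc N th i * uc N th i + vc N th i * vc N th i = rhoc N th.
Proof.
  unfold uc, vc, rhoc. pose proof (sc1 (th i)).
  set (X := Xc N th) in *. set (Y := Yc N th) in *.
  replace (X * X + Y * Y) with ((X * X + Y * Y) * (sin (th i) * sin (th i) + cos (th i) * cos (th i))) by (rewrite H; ring).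
  ring.
Qed.

Lemma Xc_bound N th : (1 <= N)%nat -> Rabs (Xc N th) <= 1.
Proof.
  intros HN. unfold Xc. pose proof (INR_posN N HN). rewrite Rabs_mult.
  rewrite Rabs_inv, (Rabs_right (INR N)) by lra.
  pose proof (sum_abs_le (fun j => cos (th j)) (N-1) ltac:(intros; apply Rabs_le; apply COS_bound)).
  replace (S (N-1)) with N in H0 by lia.
  apply Rmult_le_compat_l with (r := / INR N) in H0; [|left; apply Rinv_0_lt_compat; lra].
  rewrite Rinv_l in H0 by lra. lra.
Qed.

Lemma Yc_bound N th : (1 <= N)%nat -> Rabs (Yc N th) <= 1.
Proof.
  intros HN. unfold Yc. pose proof (INR_posN N HN). rewrite Rabs_mult.
  rewrite Rabs_inv, (Rabs_right (INR N)) by lra.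
  pose proof (sum_abs_le (fun j => sin (th j)) (N-1) ltac:(intros; apply Rabs_le; apply SIN_bound)).
  replace (S (N-1)) with N in H0 by lia.
  apply Rmult_le_compat_l with (r := / INR N) in H0; [|left; apply Rinv_0_lt_compat; lra].
  rewrite Rinv_l in H0 by lra. lra.
Qed.

Lemma rho_le2 N th : (1 <= N)%nat -> 0 <= rhoc N th <= 2.
Proof.
  intros HN. pose proof (Xc_bound N th HN). pose proof (Yc_bound N th HN).
  unfold rhoc. set (X := Xc N th) in *. set (Y := Yc N th) in *.
  assert (X * X = Rabs X * Rabs X) by (rewrite <- Rabs_mult; rewrite Rabs_right; nra).
  assert (Y * Y = Rabs Y * Rabs Y) by (rewrite <- Rabs_mult; rewrite Rabs_right; nra).
  pose proof (Rabs_pos X). pose proof (Rabs_pos Y).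
  split; nra.
Qed.

Lemma u_ge N th i : (1 <= N)%nat -> -3/2 <= uc N th i.
Proof.
  intros HN. pose proof (uv_sq N th i). pose proof (rho_le2 N th HN). nra.
Qed.

Lemma sum_u N th : (1 <= N)%nat -> sum_f_R0 (uc N th) (N-1) = INR N * rhoc N th.
Proof.
  intros HN. unfold uc at 1.
  rewrite (sum_lin (fun j => cos (th j)) (fun j => sin (th j))).
  unfold rhoc, Xc, Yc. pose proof (INR_posN N HN). field. lra.
Qed.

Lemma D_nonneg N th : 0 <= Dc N th.
Proof. unfold Dc. apply cond_pos_sum. intros. nra. Qed.

Lemma v_le_D N th i : (i < N)%nat -> vc N th i * vc N th i <= Dc N th.
Proof.
  intros Hi. unfold Dc. apply (sum_term_le (fun j => vc N th j * vc N th j)). intros; nra. lia.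
Qed.

Lemma count_lemma (u v : nat -> R) s n : 0 < s ->
  (forall j, (j <= n)%nat -> u j * u j + v j * v j = s * s) ->
  exists m, (m <= S n)%nat /\
    Rabs (sum_f_R0 u n - (INR (S n) - 2 * INR m) * s) * s <= sum_f_R0 (fun j => v j * v j) n.
Proof.
  intros Hs. induction n; intros H.
  - simpl. specialize (H 0%nat (le_n _)).
    destruct (Rle_lt_dec 0 (u 0%nat)).
    + exists 0%nat. split; [lia|]. simpl.
      replace (u 0%nat - (1 - 2 * 0) * s) with (u 0%nat - s) by ring.
      rewrite Rabs_left1 by nra. nra.
    + exists 1%nat. split; [lia|]. simpl.
      replace (u 0%nat - (1 - 2 * 1) * s) with (u 0%nat + s) by ring.
      rewrite Rabs_right by nra. nra.
  - destruct IHn as [m [Hm Hb]]. intros; apply H; lia.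
    specialize (H (S n) (le_n _)). simpl sum_f_R0.
    destruct (Rle_lt_dec 0 (u (S n))).
    + exists m. split; [lia|]. rewrite S_INR.
      replace (sum_f_R0 u n + u (S n) - (INR (S n) + 1 - 2 * INR m) * s)
        with ((sum_f_R0 u n - (INR (S n) - 2 * INR m) * s) + (u (S n) - s)) by ring.
      eapply Rle_trans. apply Rmult_le_compat_r. lra. apply Rabs_triang.
      rewrite Rmult_plus_distr_r. rewrite (Rabs_left1 (u (S n) - s)) by nra. nra.
    + exists (S m). split; [lia|]. rewrite (S_INR (S n)), (S_INR m).
      replace (sum_f_R0 u n + u (S n) - (INR (S n) + 1 - 2 * (INR m + 1)) * s)
        with ((sum_f_R0 u n - (INR (S n) - 2 * INR m) * s) + (u (S n) + s)) by ring.
      eapply Rle_trans. apply Rmult_le_compat_r. lra. apply Rabs_triang.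
      rewrite Rmult_plus_distr_r. rewrite (Rabs_right (u (S n) + s)) by nra. nra.
Qed.

Lemma cos_2k (m : Z) : cos (2 * PI * IZR m) = 1.
Proof.
  replace (2 * PI * IZR m) with (2 * (IZR m * PI)) by ring. rewrite cos_2a.
  rewrite sin_eq_0_1 by (exists m; auto). pose proof (sc1 (IZR m * PI)).
  rewrite sin_eq_0_1 in H by (exists m; auto). lra.
Qed.

Lemma ang0 x : sin x = 0 -> cos x = 1 -> exists m : Z, x = 2 * PI * IZR m.
Proof.
  intros Hs Hc. destruct (sin_eq_0_0 x Hs) as [k Hk].
  destruct (Z.Even_or_Odd k) as [[m Hm]|[m Hm]]; subst.
  - exists m. rewrite mult_IZR. simpl. ring.
  - exfalso. rewrite plus_IZR, mult_IZR in Hc. simpl IZR in Hc.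
    replace ((2 * IZR m + 1) * PI) with (2 * PI * IZR m + PI) in Hc by ring.
    rewrite neg_cos, cos_2k in Hc. lra.
Qed.

Lemma ang_pi x : sin x = 0 -> cos x = -1 -> exists m : Z, x = PI + 2 * PI * IZR m.
Proof.
  intros Hs Hc. destruct (ang0 (x - PI)) as [m Hm].
  - rewrite sin_minus, sin_PI, cos_PI, Hs. ring.
  - rewrite cos_minus, sin_PI, cos_PI, Hc. ring.
  - exists m. lra.
Qed.

Lemma sin_half0 x : sin (x / 2) = 0 -> exists m : Z, x = 2 * PI * IZR m.
Proof.
  intros H. destruct (sin_eq_0_0 _ H) as [k Hk]. exists k. lra.
Qed.

Lemma filter_split (p : nat -> bool) (l : list nat) :
  (length (filter p l) + length (filter (fun j => negb (p j)) l))%nat = length l.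
Proof. induction l; simpl; auto. destruct (p a); simpl; lia. Qed.

Lemma count_filter (p : nat -> bool) n :
  sum_f_R0 (fun j => if p j then 1 else -1) n =
  INR (S n) - 2 * INR (length (filter (fun j => negb (p j)) (seq 0 (S n)))).
Proof.
  induction n.
  - simpl. destruct (p 0%nat); simpl; ring.
  - rewrite seq_S, filter_app, length_app. simpl sum_f_R0. rewrite IHn.
    simpl (0 + S n)%nat. rewrite plus_INR. rewrite (S_INR (S n)).
    cbn [filter]. destruct (p (S n)); cbn [negb length]; change (INR 1) with 1; change (INR 0) with 0; ring.
Qed.

Definition posb N th j : bool := if Rlt_dec 0 (uc N th j) then true else false.

Lemma cs_rel N th a b : vc N th a = 0 -> vc N th b = 0 -> 0 < rhoc N th ->
  cos (th a - th b) * rhoc N th = uc N th a * uc N th b /\ sin (th a - th b) = 0.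
Proof.
  intros Ha Hb Hr.
  assert (Ca : cos (th a) * rhoc N th = Xc N th * uc N th a + Yc N th * vc N th a)
    by (unfold rhoc, uc, vc; ring).
  assert (Sa : sin (th a) * rhoc N th = Yc N th * uc N th a - Xc N th * vc N th a)
    by (unfold rhoc, uc, vc; ring).
  assert (Cb : cos (th b) * rhoc N th = Xc N th * uc N th b + Yc N th * vc N th b)
    by (unfold rhoc, uc, vc; ring).
  assert (Sb : sin (th b) * rhoc N th = Yc N th * uc N th b - Xc N th * vc N th b)
    by (unfold rhoc, uc, vc; ring).
  rewrite Ha in Ca, Sa. rewrite Hb in Cb, Sb.
  rewrite cos_minus, sin_minus. split.
  - apply Rmult_eq_reg_r with (rhoc N th); [|lra].
    transitivity ((cos (th a) * rhoc N th) * (cos (th b) * rhoc N th) +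
                  (sin (th a) * rhoc N th) * (sin (th b) * rhoc N th)); [ring|].
    rewrite Ca, Sa, Cb, Sb. unfold rhoc. ring.
  - apply Rmult_eq_reg_r with (rhoc N th * rhoc N th); [|nra].
    transitivity ((sin (th a) * rhoc N th) * (cos (th b) * rhoc N th) -
                  (cos (th a) * rhoc N th) * (sin (th b) * rhoc N th)); [ring|].
    rewrite Ca, Sa, Cb, Sb. ring.
Qed.

Lemma type_construct N th : (1 <= N)%nat -> (forall j, (j<N)%nat -> vc N th j = 0) ->
  0 < rhoc N th ->
  exists k, is_type N k th /\
    ((2 <= k)%nat -> exists phi a b c d, (a<N)%nat /\ (b<N)%nat /\ (c<N)%nat /\ (d<N)%nat /\
       a<>b /\ c<>d /\
       eq_mod2pi (th a) phi /\ eq_mod2pi (th b) phi /\ eq_mod2pi (th c) (phi+PI) /\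
       eq_mod2pi (th d) (phi+PI)).
Proof.
  intros HN Hv Hr.
  set (rho := rhoc N th) in *.
  set (r := sqrt rho).
  assert (Hr0 : 0 < r) by (apply sqrt_lt_R0; auto).
  assert (Hrr : r * r = rho) by (apply sqrt_sqrt; lra).
  assert (Hu : forall j, (j < N)%nat -> uc N th j * uc N th j = rho).
  { intros j Hj. pose proof (uv_sq N th j). rewrite Hv in H by auto. fold rho in H. lra. }
  assert (Hsig : forall j, (j < N)%nat -> uc N th j = if posb N th j then r else -r).
  { intros j Hj. specialize (Hu j Hj). unfold posb. destruct (Rlt_dec 0 (uc N th j)).
    - assert ((uc N th j - r) * (uc N th j + r) = 0) by nra.
      apply Rmult_integral in H. destruct H; lra.
    - assert ((uc N th j - r) * (uc N th j + r) = 0) by nra.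
      apply Rmult_integral in H. destruct H; [|lra]. assert (uc N th j = r) by lra.
      lra. }
  set (I := filter (posb N th) (seq 0 N)).
  set (J := filter (fun j => negb (posb N th j)) (seq 0 N)).
  set (k := length J).
  assert (HIJ : (length I + k)%nat = N).
  { unfold I, k, J. rewrite filter_split. apply length_seq. }
  assert (Hsum : INR N * rho = r * (INR N - 2 * INR k)).
  { unfold rho. rewrite <- sum_u by auto.
    rewrite (sum_eq _ (fun j => r * (if posb N th j then 1 else -1) + 0 * 0)).
    - rewrite sum_lin. rewrite count_filter. replace (S (N-1)) with N by lia. fold J. fold k.
      ring.
    - intros i Hi. rewrite Hsig by lia. destruct (posb N th i); ring. }
  assert (Hk : INR N * r = INR N - 2 * INR k).
  { apply Rmult_eq_reg_l with r; [|lra]. rewrite <- Hsum. rewrite <- Hrr. ring. }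
  assert (Hk2 : (2 * k < N)%nat).
  { apply INR_lt. rewrite mult_INR. change (INR 2%nat) with 2. pose proof (INR_posN N HN). nra. }
  assert (HinI : forall i, In i I <-> (i < N)%nat /\ posb N th i = true).
  { intros i. unfold I. rewrite filter_In, in_seq. split; intros [? ?]; split; auto; lia. }
  assert (HinJ : forall i, In i J <-> (i < N)%nat /\ posb N th i = false).
  { intros i. unfold J. rewrite filter_In, in_seq. destruct (posb N th i); simpl; split; intros [? ?]; split; auto; try lia; discriminate. }
  destruct I as [|j0 I'] eqn:EI.
  { simpl in HIJ. lia. }
  assert (Hj0 : (j0 < N)%nat /\ posb N th j0 = true) by (apply HinI; simpl; auto).
  set (phi := th j0).
  assert (Hcls : forall i, (i < N)%nat ->
     (posb N th i = true -> eq_mod2pi (th i) phi) /\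
     (posb N th i = false -> eq_mod2pi (th i) (phi + PI))).
  { intros i Hi. destruct (cs_rel N th i j0) as [Hc Hs]; try apply Hv; try tauto; auto.
    fold rho in Hc. rewrite (Hsig i Hi), (Hsig j0 (proj1 Hj0)), (proj2 Hj0) in Hc.
    split; intros Hp; rewrite Hp in Hc.
    - destruct (ang0 (th i - th j0)) as [m Hm]; auto.
      + apply Rmult_eq_reg_r with rho; lra.
      + exists m. unfold phi. lra.
    - destruct (ang_pi (th i - th j0)) as [m Hm]; auto.
      + apply Rmult_eq_reg_r with rho; lra.
      + exists m. unfold phi. lra. }
  exists k. split.
  - split; auto. exists phi, (j0 :: I'). repeat split.
    + rewrite <- EI. unfold I. apply NoDup_filter, seq_NoDup.
    + intros i Hi. apply HinI in Hi. tauto.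
    + lia.
    + intros Hin. apply HinI in Hin. apply (Hcls i H). tauto.
    + intros Hin. apply (Hcls i H). destruct (posb N th i) eqn:E; auto.
      exfalso. apply Hin. apply HinI. auto.
  - intros Hk2'. 
    assert (HJnd : NoDup J) by (unfold J; apply NoDup_filter, seq_NoDup).
    assert (HInd : NoDup (j0 :: I')) by (rewrite <- EI; unfold I; apply NoDup_filter, seq_NoDup).
    destruct J as [|c [|d J']] eqn:EJ; unfold k in *; simpl in Hk2'; try lia.
    destruct I' as [|b I'']; simpl in HIJ, Hk2; try lia.
    assert (Hc : (c < N)%nat /\ posb N th c = false) by (apply HinJ; simpl; auto).
    assert (Hd : (d < N)%nat /\ posb N th d = false) by (apply HinJ; simpl; auto).
    assert (Hb : (b < N)%nat /\ posb N th b = true) by (apply HinI; simpl; auto).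
    apply NoDup_cons_iff in HJnd. apply NoDup_cons_iff in HInd.
    exists phi, j0, b, c, d. repeat split; try tauto.
    + intros E; subst; apply (proj1 HInd); simpl; auto.
    + intros E; subst; apply (proj1 HJnd); simpl; auto.
    + apply (Hcls j0 (proj1 Hj0)). tauto.
    + apply (Hcls b (proj1 Hb)). tauto.
    + apply (Hcls c (proj1 Hc)). tauto.
    + apply (Hcls d (proj1 Hd)). tauto.
Qed.

Definition th_at (theta : nat -> R -> R) t := fun j => theta j t.
Definition rho_t N theta t := rhoc N (th_at theta t).
Definition D_t N theta t := Dc N (th_at theta t).

Lemma theta_deriv N theta : (2 <= N)%nat -> is_solution N theta ->
  forall i t, (i < N)%nat -> 0 < t -> dpl (theta i) t (vc N (th_at theta t) i).
Proof.
  intros HN [Hs _] i t Hi Ht. rewrite <- kur_v by lia. apply Hs; auto.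
Qed.

Lemma X_deriv N theta : (2 <= N)%nat -> is_solution N theta -> forall t, 0 < t ->
  dpl (fun t => Xc N (th_at theta t)) t
      (/ INR N * sum_f_R0 (fun j => - sin (theta j t) * vc N (th_at theta t) j) (N-1)).
Proof.
  intros HN Hs t Ht. unfold Xc. apply dl_scal.
  apply (dl_sum (fun j y => cos (th_at theta y j))). intros j Hj. unfold th_at at 2.
  apply (dl_cos (theta j)). apply theta_deriv; auto; lia.
Qed.

Lemma Y_deriv N theta : (2 <= N)%nat -> is_solution N theta -> forall t, 0 < t ->
  dpl (fun t => Yc N (th_at theta t)) t
      (/ INR N * sum_f_R0 (fun j => cos (theta j t) * vc N (th_at theta t) j) (N-1)).
Proof.
  intros HN Hs t Ht. unfold Yc. apply dl_scal.
  apply (dl_sum (fun j y => sin (th_at theta y j))). intros j Hj. unfold th_at at 2.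
  apply (dl_sin (theta j)). apply theta_deriv; auto; lia.
Qed.

Lemma rho_deriv N theta : (2 <= N)%nat -> is_solution N theta -> forall t, 0 < t ->
  dpl (rho_t N theta) t (2 / INR N * D_t N theta t).
Proof.
  intros HN Hs t Ht. unfold rho_t, rhoc.
  eapply dl_eq; [|apply dl_plus; apply dl_mult;
     (apply X_deriv || apply Y_deriv); auto].
  unfold D_t, Dc.
  set (X := Xc N (th_at theta t)). set (Y := Yc N (th_at theta t)).
  assert (E : sum_f_R0 (fun j => vc N (th_at theta t) j * vc N (th_at theta t) j) (N - 1) =
     X * sum_f_R0 (fun j => - sin (theta j t) * vc N (th_at theta t) j) (N - 1) +
     Y * sum_f_R0 (fun j => cos (theta j t) * vc N (th_at theta t) j) (N - 1)).
  { rewrite <- sum_lin. apply sum_eq. intros i _. unfold vc. fold X Y.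
    unfold th_at. ring. }
  rewrite E. unfold Rdiv. ring.
Qed.

Lemma rho_mono N theta : (2 <= N)%nat -> is_solution N theta ->
  forall x y, 0 < x -> x <= y -> rho_t N theta x <= rho_t N theta y.
Proof.
  intros HN Hs. apply (mono_inc _ (fun t => 2 / INR N * D_t N theta t) 0).
  - intros; apply rho_deriv; auto.
  - intros t _. pose proof (D_nonneg N (th_at theta t)). unfold D_t.
    pose proof (INR_posN N ltac:(lia)). apply Rmult_le_pos; auto.
    apply Rlt_le, Rdiv_lt_0_compat; lra.
Qed.

Lemma rho_bnd N theta t : (2 <= N)%nat -> 0 <= rho_t N theta t <= 2.
Proof. intros; apply rho_le2; lia. Qed.

Lemma const_on N theta : (2 <= N)%nat -> is_solution N theta -> forall i a,
  (i < N)%nat -> 0 <= a -> (forall t, a < t -> vc N (th_at theta t) i = 0) ->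
  forall x y, a < x -> a < y -> theta i x = theta i y.
Proof.
  intros HN Hs i a Hi Ha Hv.
  assert (Hd : forall t, a < t -> dpl (theta i) t 0).
  { intros t Ht. rewrite <- (Hv t Ht). apply theta_deriv; auto; lra. }
  assert (M : forall x y, a < x -> x <= y -> theta i x = theta i y).
  { intros x y Hx Hxy. apply Rle_antisym.
    - apply (mono_inc _ (fun _ => 0) a); auto. intros; lra.
    - apply (mono_dec _ (fun _ => 0) a); auto. intros; lra. }
  intros x y Hx Hy. destruct (Rle_dec x y). apply M; auto. symmetry; apply M; lra.
Qed.

Lemma rho_pos N theta : (2 <= N)%nat -> is_solution N theta ->
  ~ is_stationary_solution N theta -> exists t0, 0 < t0 /\ 0 < rho_t N theta t0.
Proof.
  intros HN Hs Hns. apply NNPP. intros Hc. apply Hns.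
  assert (Hz : forall t, 0 < t -> rho_t N theta t = 0).
  { intros t Ht. pose proof (rho_bnd N theta t HN). destruct (Rle_lt_or_eq_dec 0 _ (proj1 H)).
    - exfalso; apply Hc; exists t; auto.
    - auto. }
  assert (Hv : forall i t, 0 < t -> vc N (th_at theta t) i = 0).
  { intros i t Ht. pose proof (uv_sq N (th_at theta t) i). specialize (Hz t Ht).
    unfold rho_t in Hz. rewrite Hz in H. nra. }
  intros i Hi t Ht.
  assert (H1 : theta i 1 = theta i 0).
  { pose proof Hs as [_ Hrc]. apply Rminus_diag_uniq. destruct (Req_dec (theta i 1 - theta i 0) 0); auto.
    exfalso. pose proof (Rabs_no_R0 _ H) as Z1. pose proof (Rabs_pos (theta i 1 - theta i 0)).
    destruct (Hrc i Hi (Rabs (theta i 1 - theta i 0))) as [d [Hd Hd2]]; [lra|].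
    set (t1 := Rmin (d/2) 1).
    assert (0 < t1) by (unfold t1; apply Rmin_glb_lt; lra).
    assert (t1 <= d/2) by apply Rmin_l.
    specialize (Hd2 t1 ltac:(lra)).
    rewrite (const_on N theta HN Hs i 0 Hi (Rle_refl _) (fun t Ht => Hv i t Ht) t1 1) in Hd2; lra. }
  exists 0%Z. simpl IZR. rewrite Rmult_0_r, Rplus_0_r.
  destruct (Rle_lt_or_eq_dec 0 t Ht) as [Ht'|Ht']; [|subst; auto].
  rewrite <- H1. apply (const_on N theta HN Hs i 0); auto; lra.
Qed.

Lemma rho_limit N theta : (2 <= N)%nat -> is_solution N theta ->
  exists L, (forall t, 0 < t -> rho_t N theta t <= L) /\
    (forall e, 0 < e -> exists T, 0 < T /\ forall t, T <= t -> L - rho_t N theta t < e).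
Proof.
  intros HN Hs.
  set (u := fun n => rho_t N theta (INR n + 1)).
  assert (Hg : Un_growing u).
  { intros n. unfold u. apply rho_mono; auto. pose proof (pos_INR n); lra. rewrite S_INR; lra. }
  assert (Hb : has_ub u).
  { exists 2. intros x [n ->]. unfold u. apply rho_bnd; auto. }
  destruct (growing_cv u Hg Hb) as [L HL]. exists L. split.
  - intros t Ht. destruct (nat_above t) as [n Hn].
    apply Rle_trans with (u n). unfold u. apply rho_mono; auto; lra.
    apply growing_ineq; auto.
  - intros e He. destruct (HL e He) as [n0 Hn0]. exists (INR n0 + 1). split.
    pose proof (pos_INR n0); lra. intros t Ht.
    specialize (Hn0 n0 (le_n _)). unfold R_dist in Hn0.
    assert (u n0 <= rho_t N theta t) by (unfold u; apply rho_mono; auto; pose proof (pos_INR n0); lra).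
    apply Rabs_def2 in Hn0. lra.
Qed.

Lemma D_small N theta : (2 <= N)%nat -> is_solution N theta ->
  forall d T, 0 < d -> exists t, T <= t /\ 0 < t /\ D_t N theta t < d.
Proof.
  intros HN Hs d T Hd. apply NNPP. intros Hc.
  assert (HD : forall t, T <= t -> 0 < t -> d <= D_t N theta t).
  { intros t H1 H2. apply Rnot_lt_le. intros H3. apply Hc. exists t; auto. }
  set (a := Rmax T 1).
  pose proof (INR_posN N ltac:(lia)) as HNp.
  set (g := fun t => 2 / INR N * d * t - rho_t N theta t).
  assert (Hm : forall x y, a < x -> x <= y -> g y <= g x).
  { apply (mono_dec g (fun t => 2 / INR N * d - 2 / INR N * D_t N theta t) a).
    - intros t Ht. unfold g. apply dl_minus.
      + replace (2 / INR N * d) with (2 / INR N * d * 1) at 2 by ring. apply dl_scal, dl_id.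
      + apply rho_deriv; auto. pose proof (Rmax_r T 1). unfold a in Ht. lra.
    - intros t Ht. pose proof (Rmax_l T 1). pose proof (Rmax_r T 1). unfold a in Ht.
      specialize (HD t ltac:(lra) ltac:(lra)).
      assert (0 < 2 / INR N) by (apply Rdiv_lt_0_compat; lra). nra. }
  set (x := a + 1). set (y := a + 1 + INR N / d + 1).
  assert (0 < INR N / d) by (apply Rdiv_lt_0_compat; lra).
  specialize (Hm x y ltac:(unfold x; lra) ltac:(unfold x, y; lra)).
  unfold g in Hm. pose proof (rho_bnd N theta x HN). pose proof (rho_bnd N theta y HN).
  assert (2 / INR N * d * (INR N / d + 1) <= 2).
  { assert (2 / INR N * d * y - 2 / INR N * d * x = 2 / INR N * d * (INR N / d + 1))
      by (unfold x, y; ring). lra. }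
  assert (2 / INR N * d * (INR N / d + 1) = 2 + 2 * d / INR N) by (field; lra).
  assert (0 < 2 * d / INR N) by (apply Rdiv_lt_0_compat; lra). lra.
Qed.

Lemma Rabs_le_inv' x a : Rabs x <= a -> - a <= x <= a.
Proof. unfold Rabs; destruct (Rcase_abs x); lra. Qed.

Lemma KI N theta t : (2 <= N)%nat -> 0 < rho_t N theta t ->
  exists m, (m <= N)%nat /\
    Rabs (INR N * sqrt (rho_t N theta t) - (INR N - 2 * INR m)) * rho_t N theta t <= D_t N theta t.
Proof.
  intros HN Hr. set (rho := rho_t N theta t) in *. set (s := sqrt rho).
  assert (Hs : 0 < s) by (apply sqrt_lt_R0; auto).
  assert (Hss : s * s = rho) by (apply sqrt_sqrt; lra).
  destruct (count_lemma (uc N (th_at theta t)) (vc N (th_at theta t)) s (N-1) Hs) as [m [Hm Hb]].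
  { intros j _. rewrite uv_sq. fold (rho_t N theta t). fold rho. auto. }
  replace (S (N-1)) with N in * by lia.
  exists m. split; auto.
  rewrite sum_u in Hb by lia. fold (rho_t N theta t) in Hb. fold rho in Hb.
  unfold D_t. unfold Dc in *.
  replace (INR N * rho - (INR N - 2 * INR m) * s) with
      ((INR N * s - (INR N - 2 * INR m)) * s) in Hb by (rewrite <- Hss; ring).
  rewrite Rabs_mult, (Rabs_right s) in Hb by lra. rewrite <- Hss. nra.
Qed.

Lemma nat_close a b : Rabs (INR a - INR b) < 1 -> a = b.
Proof.
  intros H. apply Rabs_def2 in H. destruct (lt_eq_lt_dec a b) as [[H1|H1]|H1]; auto.
  - apply le_INR in H1. rewrite S_INR in H1. lra.
  - apply le_INR in H1. rewrite S_INR in H1. lra.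
Qed.

Lemma level N theta L t0 : (2 <= N)%nat -> is_solution N theta ->
  (forall t, 0 < t -> rho_t N theta t <= L) ->
  (forall e, 0 < e -> exists T, 0 < T /\ forall t, T <= t -> L - rho_t N theta t < e) ->
  0 < t0 -> 0 < rho_t N theta t0 ->
  exists k, (2 * k < N)%nat /\ INR N * sqrt L = INR N - 2 * INR k.
Proof.
  intros HN Hs HL1 HL2 Ht0 Hr0.
  set (r0 := rho_t N theta t0) in *.
  assert (HL : r0 <= L) by (apply HL1; auto).
  set (r := sqrt L).
  assert (Hr : 0 < r) by (apply sqrt_lt_R0; lra).
  assert (Hrr : r * r = L) by (apply sqrt_sqrt; lra).
  pose proof (INR_posN N ltac:(lia)) as HNp.
  assert (Happ : forall e, 0 < e -> exists m : nat, Rabs (INR N * r - (INR N - 2 * INR m)) < e).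
  { intros e He. destruct (HL2 (e * r / (2 * INR N))) as [T1 [HT1 HT1']].
    { apply Rdiv_lt_0_compat; nra. }
    destruct (D_small N theta HN Hs (e * r0 / 2) (Rmax T1 t0)) as [t [Ht1 [Ht2 Ht3]]]. nra.
    assert (Hrt : r0 <= rho_t N theta t).
    { apply rho_mono; auto. pose proof (Rmax_r T1 t0); lra. }
    destruct (KI N theta t HN ltac:(lra)) as [m [Hm Hb]].
    exists m.
    set (rt := rho_t N theta t) in *. set (s := sqrt rt) in *.
    assert (Hs0 : 0 <= s) by apply sqrt_pos.
    assert (Hss : s * s = rt) by (apply sqrt_sqrt; lra).
    assert (Hrtl : rt <= L) by (apply HL1; auto).
    assert (Hsr : s <= r) by (apply sqrt_le_1_alt; auto).
    assert (HLr : L - rt < e * r / (2 * INR N)).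
    { apply HT1'. pose proof (Rmax_l T1 t0); lra. }
    assert (H1 : Rabs (INR N * s - (INR N - 2 * INR m)) < e / 2).
    { pose proof (Rabs_pos (INR N * s - (INR N - 2 * INR m))).
      assert (Rabs (INR N * s - (INR N - 2 * INR m)) * r0 <= Rabs (INR N * s - (INR N - 2 * INR m)) * rt)
        by (apply Rmult_le_compat_l; auto).
      assert (Rabs (INR N * s - (INR N - 2 * INR m)) * r0 < e / 2 * r0) by lra.
      apply Rmult_lt_reg_r with r0; lra. }
    assert (H2 : INR N * (r - s) < e / 2).
    { assert ((r - s) * (r + s) = L - rt) by (rewrite <- Hrr, <- Hss; ring).
      assert ((r - s) * r <= L - rt) by nra.
      assert ((r - s) * r < e * r / (2 * INR N)) by lra.
      assert (Hrs : r - s < e / (2 * INR N)).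
      { apply Rmult_lt_reg_r with r; auto. replace (e / (2 * INR N) * r) with (e * r / (2 * INR N))
          by (field; lra). lra. }
      apply Rmult_lt_compat_l with (r := INR N) in Hrs; auto.
      replace (INR N * (e / (2 * INR N))) with (e / 2) in Hrs by (field; lra). lra. }
    replace (INR N * r - (INR N - 2 * INR m)) with
      ((INR N * s - (INR N - 2 * INR m)) + INR N * (r - s)) by ring.
    eapply Rle_lt_trans. apply Rabs_triang. rewrite (Rabs_right (INR N * (r - s))) by nra. lra. }
  destruct (Happ 1 Rlt_0_1) as [k Hk].
  assert (Hex : INR N * r = INR N - 2 * INR k).
  { apply Rminus_diag_uniq. destruct (Req_dec (INR N * r - (INR N - 2 * INR k)) 0) as [Z|Z]; auto.
    exfalso. pose proof (Rabs_no_R0 _ Z) as Z1. pose proof (Rabs_pos (INR N * r - (INR N - 2 * INR k))).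
    destruct (Happ (Rmin 1 (Rabs (INR N * r - (INR N - 2 * INR k))))) as [m Hm].
    { apply Rmin_glb_lt; lra. }
    pose proof (Rmin_l 1 (Rabs (INR N * r - (INR N - 2 * INR k)))).
    pose proof (Rmin_r 1 (Rabs (INR N * r - (INR N - 2 * INR k)))).
    assert (m = k).
    { apply nat_close. apply Rabs_def2 in Hk. apply Rabs_def2 in Hm. apply Rabs_def1; lra. }
    subst m. lra. }
  exists k. split; auto.
  apply INR_lt. rewrite mult_INR. change (INR 2%nat) with 2. nra.
Qed.

Lemma lojas N theta L t0 : (2 <= N)%nat -> is_solution N theta ->
  (forall t, 0 < t -> rho_t N theta t <= L) ->
  (forall e, 0 < e -> exists T, 0 < T /\ forall t, T <= t -> L - rho_t N theta t < e) ->
  0 < t0 -> 0 < rho_t N theta t0 ->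
  exists C T, 0 < C /\ 0 < T /\ forall t, T <= t -> L - rho_t N theta t <= C * D_t N theta t.
Proof.
  intros HN Hs HL1 HL2 Ht0 Hr0.
  destruct (level N theta L t0 HN Hs HL1 HL2 Ht0 Hr0) as [k [Hk2 Hk]].
  set (r0 := rho_t N theta t0) in *.
  assert (HL : r0 <= L) by (apply HL1; auto).
  set (r := sqrt L) in *.
  assert (Hr : 0 < r) by (apply sqrt_lt_R0; lra).
  assert (Hrr : r * r = L) by (apply sqrt_sqrt; lra).
  pose proof (INR_posN N ltac:(lia)) as HNp.
  assert (HL2' : L <= 3).
  { destruct (HL2 1 Rlt_0_1) as [T0 [_ HT0]]. specialize (HT0 T0 (Rle_refl _)).
    pose proof (rho_bnd N theta T0 HN). lra. }
  destruct (HL2 (r / INR N)) as [T1 [HT1 HT1']]. apply Rdiv_lt_0_compat; lra.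
  exists (4 / r0), (Rmax T1 t0). split. apply Rdiv_lt_0_compat; lra. split.
  pose proof (Rmax_r T1 t0); lra.
  intros t Ht. pose proof (Rmax_l T1 t0). pose proof (Rmax_r T1 t0).
  assert (Hrt : r0 <= rho_t N theta t) by (apply rho_mono; auto; lra).
  destruct (KI N theta t HN ltac:(lra)) as [m [Hm Hb]].
  set (rt := rho_t N theta t) in *. set (s := sqrt rt) in *.
  set (D := D_t N theta t) in *.
  assert (HD : 0 <= D) by apply D_nonneg.
  assert (Hs0 : 0 <= s) by apply sqrt_pos.
  assert (Hss : s * s = rt) by (apply sqrt_sqrt; lra).
  assert (Hrtl : rt <= L) by (apply HL1; lra).
  assert (Hsr : s <= r) by (apply sqrt_le_1_alt; auto).
  assert (HLr : L - rt < r / INR N) by (apply HT1'; lra).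
  assert (Hrs1 : INR N * (r - s) < 1).
  { assert ((r - s) * (r + s) = L - rt) by (rewrite <- Hrr, <- Hss; ring).
    assert ((r - s) * r < r / INR N) by nra.
    assert (Hrs : r - s < / INR N).
    { apply Rmult_lt_reg_r with r; auto. replace (/ INR N * r) with (r / INR N) by (field; lra). lra. }
    apply Rmult_lt_compat_l with (r := INR N) in Hrs; auto. rewrite Rinv_r in Hrs; lra. }
  set (q := D / r0).
  assert (Hq : Rabs (INR N * s - (INR N - 2 * INR m)) <= q).
  { unfold q. apply Rmult_le_reg_r with r0; auto. unfold Rdiv. rewrite Rmult_assoc, Rinv_l by lra.
    rewrite Rmult_1_r. pose proof (Rabs_pos (INR N * s - (INR N - 2 * INR m))). nra. }
  apply Rabs_le_inv' in Hq.
  assert (Hmain : INR N * (r - s) <= q).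
  { destruct (lt_eq_lt_dec m k) as [[H1|H1]|H1].
    - apply le_INR in H1. rewrite S_INR in H1. nra.
    - subst m. nra.
    - apply le_INR in H1. rewrite S_INR in H1. nra. }
  assert (L - rt = (r - s) * (r + s)) by (rewrite <- Hrr, <- Hss; ring).
  assert (r <= 2) by nra.
  assert (1 <= INR N) by (change 1 with (INR 1); apply le_INR; lia).
  assert ((INR N - 1) * (r - s) >= 0) by (apply Rle_ge, Rmult_le_pos; lra).
  assert (r - s <= q) by nra.
  assert (L - rt <= 4 * q) by nra.
  unfold q in *. unfold Rdiv in *. lra.
Qed.

Lemma pos_deriv_incr f t l : dpl f t l -> 0 < l -> exists h, 0 < h /\ f t < f (t + h).
Proof.
  intros H Hl. destruct (H l Hl) as [d Hd]. pose proof (cond_pos d) as Hd0.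
  exists (d/2). split. lra.
  specialize (Hd (d/2) ltac:(lra) ltac:(rewrite Rabs_right; lra)).
  apply Rabs_def2 in Hd. destruct Hd as [_ Hd].
  assert (0 < (f (t + d/2) - f t) / (d/2)) by lra.
  assert (0 < (f (t + d/2) - f t) / (d/2) * (d/2)) by (apply Rmult_lt_0_compat; lra).
  replace ((f (t + d/2) - f t) / (d/2) * (d/2)) with (f (t + d/2) - f t) in H1 by (field; lra).
  lra.
Qed.

Lemma sq_le x y : x * x <= y * y -> 0 <= y -> - y <= x <= y.
Proof. intros. split; nra. Qed.

Lemma theta_conv N theta : (2 <= N)%nat -> is_solution N theta ->
  ~ is_stationary_solution N theta -> forall j, (j < N)%nat -> exists l, converges_to (theta j) l.
Proof.
  intros HN Hs Hns j Hj.
  destruct (rho_pos N theta HN Hs Hns) as [t0 [Ht0 Hr0]].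
  destruct (rho_limit N theta HN Hs) as [L [HL1 HL2]].
  destruct (lojas N theta L t0 HN Hs HL1 HL2 Ht0 Hr0) as [C [T [HC [HT HCT]]]].
  pose proof (INR_posN N ltac:(lia)) as HNp.
  destruct (classic (exists t1, T <= t1 /\ rho_t N theta t1 = L)) as [[t1 [Ht1 Ht1']] | Hno].
  - assert (HDz : forall t, t1 < t -> D_t N theta t = 0).
    { intros t Ht. pose proof (D_nonneg N (th_at theta t)). fold (D_t N theta t) in H.
      destruct (Rle_lt_or_eq_dec _ _ H) as [Hp|Hp]; auto. exfalso.
      destruct (pos_deriv_incr _ t _ (rho_deriv N theta HN Hs t ltac:(lra))) as [h [Hh Hh']].
      { apply Rmult_lt_0_compat; auto. apply Rdiv_lt_0_compat; lra. }
      assert (rho_t N theta t1 <= rho_t N theta t) by (apply rho_mono; auto; lra).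
      pose proof (HL1 (t + h) ltac:(lra)). lra. }
    assert (Hv : forall t, t1 < t -> vc N (th_at theta t) j = 0).
    { intros t Ht. pose proof (v_le_D N (th_at theta t) j Hj). fold (D_t N theta t) in H.
      rewrite HDz in H by auto. nra. }
    exists (theta j (t1 + 1)). intros e He. exists (t1 + 1). intros t Ht.
    rewrite (const_on N theta HN Hs j t1 Hj ltac:(lra) Hv t (t1 + 1)) by lra.
    replace (theta j (t1 + 1) - theta j (t1 + 1)) with 0 by ring. rewrite Rabs_R0; auto.
  - assert (Hlt : forall t, T <= t -> rho_t N theta t < L).
    { intros t Ht. destruct (Rle_lt_or_eq_dec _ _ (HL1 t ltac:(lra))); auto.
      exfalso; apply Hno; exists t; auto. }
    set (G := fun t => sqrt (L - rho_t N theta t)).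
    set (A := INR N * (C + 1)).
    assert (HA : 0 < A) by (unfold A; nra).
    assert (dG : forall t, T < t -> dpl G t (/ (2 * G t) * (0 - 2 / INR N * D_t N theta t))).
    { intros t Ht. unfold G. apply (dl_sqrt (fun y => L - rho_t N theta y)).
      pose proof (Hlt t ltac:(lra)); lra.
      apply (dl_minus (fun _ => L)). apply dl_const. apply rho_deriv; auto; lra. }
    assert (Hkey : forall t, T < t ->
       - (A * D_t N theta t) <= vc N (th_at theta t) j * (INR N * G t) <= A * D_t N theta t).
    { intros t Ht. apply sq_le.
      - pose proof (v_le_D N (th_at theta t) j Hj). fold (D_t N theta t) in H.
        set (v := vc N (th_at theta t) j) in *. set (D := D_t N theta t) in *.
        assert (HD : 0 <= D) by apply D_nonneg.
        assert (Hg : G t * G t = L - rho_t N theta t).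
        { unfold G. apply sqrt_sqrt. pose proof (Hlt t ltac:(lra)); lra. }
        assert (Hg2 : G t * G t <= C * D) by (rewrite Hg; apply HCT; lra).
        assert (v * v * (G t * G t) <= D * (C * D)).
        { apply Rmult_le_compat; try nra. }
        assert (C <= (C + 1) * (C + 1)) by nra.
        assert (D * (C * D) <= (C + 1) * (C + 1) * (D * D)).
        { replace (D * (C * D)) with (C * (D * D)) by ring. apply Rmult_le_compat_r; nra. }
        unfold A.
        replace (v * (INR N * G t) * (v * (INR N * G t))) with
           ((INR N * INR N) * (v * v * (G t * G t))) by ring.
        replace (INR N * (C + 1) * D * (INR N * (C + 1) * D)) with
           ((INR N * INR N) * ((C + 1) * (C + 1) * (D * D))) by ring.
        apply Rmult_le_compat_l; nra.
      - pose proof (D_nonneg N (th_at theta t)). fold (D_t N theta t) in H. nra. }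
    assert (HGp : forall t, T < t -> 0 < G t).
    { intros t Ht. unfold G. apply sqrt_lt_R0. pose proof (Hlt t ltac:(lra)); lra. }
    assert (Hdev : forall t, T < t ->
       A * (/ (2 * G t) * (0 - 2 / INR N * D_t N theta t)) = - (A * D_t N theta t) / (INR N * G t)).
    { intros t Ht. specialize (HGp t Ht). field. split; lra. }
    assert (M1 : forall x y, T < x -> x <= y -> theta j y + A * G y <= theta j x + A * G x).
    { apply (mono_dec (fun t => theta j t + A * G t)
         (fun t => vc N (th_at theta t) j + A * (/ (2 * G t) * (0 - 2 / INR N * D_t N theta t))) T).
      - intros t Ht. apply dl_plus. apply theta_deriv; auto; lra. apply dl_scal. apply dG; auto.
      - intros t Ht. rewrite Hdev by auto. specialize (Hkey t Ht). specialize (HGp t Ht).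
        assert (vc N (th_at theta t) j <= A * D_t N theta t / (INR N * G t)).
        { apply Rmult_le_reg_r with (INR N * G t). nra.
          replace (A * D_t N theta t / (INR N * G t) * (INR N * G t)) with (A * D_t N theta t)
            by (field; lra). lra. }
        unfold Rdiv in *. lra. }
    assert (M2 : forall x y, T < x -> x <= y -> theta j x - A * G x <= theta j y - A * G y).
    { apply (mono_inc (fun t => theta j t - A * G t)
         (fun t => vc N (th_at theta t) j - A * (/ (2 * G t) * (0 - 2 / INR N * D_t N theta t))) T).
      - intros t Ht. apply dl_minus. apply theta_deriv; auto; lra. apply dl_scal. apply dG; auto.
      - intros t Ht. rewrite Hdev by auto. specialize (Hkey t Ht). specialize (HGp t Ht).
        assert (- vc N (th_at theta t) j <= A * D_t N theta t / (INR N * G t)).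
        { apply Rmult_le_reg_r with (INR N * G t). nra.
          replace (A * D_t N theta t / (INR N * G t) * (INR N * G t)) with (A * D_t N theta t)
            by (field; lra). lra. }
        unfold Rdiv in *. lra. }
    assert (Hb : forall x y, T < x -> x <= y -> Rabs (theta j x - theta j y) <= A * G x).
    { intros x y Hx Hxy. specialize (M1 x y Hx Hxy). specialize (M2 x y Hx Hxy).
      assert (0 <= G y) by apply sqrt_pos. apply Rabs_le. split; nra. }
    apply cauchy_conv. intros e He.
    destruct (HL2 ((e / A) * (e / A))) as [T2 [HT2 HT2']].
    { assert (0 < e / A) by (apply Rdiv_lt_0_compat; lra). nra. }
    exists (Rmax T2 (T + 1)). intros t1 t2 H1 H2.
    pose proof (Rmax_l T2 (T+1)). pose proof (Rmax_r T2 (T+1)).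
    assert (HG : forall t, Rmax T2 (T + 1) <= t -> A * G t < e).
    { intros t Ht. specialize (HT2' t ltac:(lra)).
      assert (Hg : G t * G t = L - rho_t N theta t).
      { unfold G. apply sqrt_sqrt. pose proof (Hlt t ltac:(lra)); lra. }
      assert (0 <= G t) by apply sqrt_pos.
      assert (0 < e / A) by (apply Rdiv_lt_0_compat; lra).
      assert (G t < e / A) by nra.
      apply Rmult_lt_compat_l with (r := A) in H5; auto.
      replace (A * (e / A)) with e in H5 by (field; lra). auto. }
    destruct (Rle_dec t1 t2).
    + eapply Rle_lt_trans. apply Hb; lra. apply HG; lra.
    + rewrite Rabs_minus_sym. eapply Rle_lt_trans. apply Hb; lra. apply HG; lra.
Qed.

Lemma trig_id2 X Y s d :
  cos d * (/ 2 * ((Y * cos (s + d) - X * sin (s + d)) - (Y * cos (s - d) - X * sin (s - d)))) =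
  - sin d * (((X * cos (s + d) + Y * sin (s + d)) + (X * cos (s - d) + Y * sin (s - d))) / 2).
Proof. rewrite cos_plus, sin_plus, cos_minus, sin_minus. field. Qed.

Lemma trig_id X Y a b :
  cos ((a - b) / 2) * (/ 2 * ((Y * cos a - X * sin a) - (Y * cos b - X * sin b))) =
  - sin ((a - b) / 2) * (((X * cos a + Y * sin a) + (X * cos b + Y * sin b)) / 2).
Proof.
  pose proof (trig_id2 X Y ((a + b)/2) ((a - b)/2)).
  replace ((a + b) / 2 + (a - b) / 2) with a in H by field.
  replace ((a + b) / 2 - (a - b) / 2) with b in H by field. exact H.
Qed.

Lemma ptolemy A B C D :
  sin (A - C) * sin (B - D) - sin (A - D) * sin (B - C) = sin (A - B) * sin (C - D).
Proof. rewrite !sin_minus. pose proof (sc1 A). pose proof (sc1 B). pose proof (sc1 C). pose proof (sc1 D). nra. Qed.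

Definition sh (theta : nat -> R -> R) x y t := sin ((theta x t - theta y t) / 2).

Lemma sh_deriv N theta x y t : (2 <= N)%nat -> is_solution N theta ->
  (x < N)%nat -> (y < N)%nat -> 0 < t ->
  dpl (sh theta x y) t
    (- sh theta x y t * ((uc N (th_at theta t) x + uc N (th_at theta t) y) / 2)).
Proof.
  intros HN Hs Hx Hy Ht. unfold sh.
  eapply dl_eq; [| apply (dl_sin (fun t => (theta x t - theta y t) / 2))].
  - unfold uc, vc, th_at. cbv beta. apply trig_id.
  - apply (dl_ext (fun t => / 2 * (theta x t - theta y t))). intros; field.
    apply dl_scal. apply dl_minus; apply theta_deriv; auto.
Qed.

Lemma cross_const N theta a b c d : (2 <= N)%nat -> is_solution N theta ->
  (a < N)%nat -> (b < N)%nat -> (c < N)%nat -> (d < N)%nat ->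
  forall tau t, 0 < tau -> tau <= t ->
  sh theta a c t * sh theta b d t * (sh theta a d tau * sh theta b c tau) -
  sh theta a d t * sh theta b c t * (sh theta a c tau * sh theta b d tau) = 0.
Proof.
  intros HN Hs Ha Hb Hc Hd tau t Htau Ht.
  set (Qt := sh theta a d tau * sh theta b c tau).
  set (Pt := sh theta a c tau * sh theta b d tau).
  set (W := fun t => sh theta a c t * sh theta b d t * Qt - sh theta a d t * sh theta b c t * Pt).
  set (H := fun t => (uc N (th_at theta t) a + uc N (th_at theta t) b +
                      uc N (th_at theta t) c + uc N (th_at theta t) d) / 2).
  assert (dW : forall t, 0 < t -> dpl W t (- W t * H t)).
  { intros s Hs0. unfold W.
    eapply dl_eq; [| apply dl_minus; (apply dl_mult; [apply dl_mult; apply (sh_deriv N); auto| apply dl_const])].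
    unfold H. field. }
  set (F := fun t => W t * W t * exp (-6 * t)).
  assert (dF : forall t, 0 < t -> dpl F t (W t * W t * exp (-6 * t) * (- 2 * H t - 6))).
  { intros s Hs0. unfold F.
    eapply dl_eq; [| apply dl_mult; [apply dl_mult; apply dW; auto | apply dl_exp, dl_scal, dl_id]].
    unfold H. field. }
  assert (HF : F t <= F tau).
  { apply (mono_dec F (fun t => W t * W t * exp (-6 * t) * (- 2 * H t - 6)) 0); auto.
    intros s Hs0. assert (-3 <= H s).
    { unfold H. pose proof (u_ge N (th_at theta s) a ltac:(lia)).
      pose proof (u_ge N (th_at theta s) b ltac:(lia)).
      pose proof (u_ge N (th_at theta s) c ltac:(lia)).
      pose proof (u_ge N (th_at theta s) d ltac:(lia)). lra. }
    pose proof (exp_pos (-6 * s)). assert (0 <= W s * W s) by nra.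
    assert (0 <= W s * W s * exp (-6 * s)) by nra. nra. }
  assert (W tau = 0) by (unfold W, Qt, Pt; ring).
  unfold F in HF. rewrite H0 in HF. pose proof (exp_pos (-6 * t)).
  assert (W t * W t * exp (-6 * t) <= 0) by lra.
  assert (W t * W t = 0) by nra. fold (W t). nra.
Qed.

Lemma conv_sh theta x y lx ly : converges_to (theta x) lx -> converges_to (theta y) ly ->
  converges_to (sh theta x y) (sin ((lx - ly) / 2)).
Proof.
  intros Hx Hy. unfold sh. apply (conv_sin (fun t => (theta x t - theta y t) / 2)).
  replace ((lx - ly) / 2) with (/ 2 * (lx - ly)) by field.
  apply (conv_ext (fun t => / 2 * (theta x t - theta y t))). intros; field.
  apply conv_scal, conv_minus; auto.
Qed.

Lemma sin_k_half k : sin (IZR k * PI - PI / 2) = - cos (IZR k * PI).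
Proof. rewrite sin_minus, sin_PI2, cos_PI2. ring. Qed.

Lemma sin_kpi k : sin (IZR k * PI) = 0.
Proof. apply sin_eq_0_1. exists k; auto. Qed.

Lemma cos_kk k1 k2 : cos (IZR k1 * PI) * cos (IZR k2 * PI) = cos (IZR (k1 + k2) * PI).
Proof.
  rewrite plus_IZR. replace ((IZR k1 + IZR k2) * PI) with (IZR k1 * PI + IZR k2 * PI) by ring.
  rewrite cos_plus, !sin_kpi. ring.
Qed.

Lemma cos_k_sq k : cos (IZR k * PI) * cos (IZR k * PI) = 1.
Proof. pose proof (sc1 (IZR k * PI)). rewrite sin_kpi in H. lra. Qed.

Lemma half_val phi m n :
  ((phi + 2 * PI * IZR m) - (phi + PI + 2 * PI * IZR n)) / 2 = IZR (m - n) * PI - PI / 2.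
Proof. rewrite minus_IZR. field. Qed.

Lemma sh_lip theta x y t : Rabs (sh theta x y t - sh theta x y 0) <=
  (Rabs (theta x t - theta x 0) + Rabs (theta y t - theta y 0)) / 2.
Proof.
  unfold sh. eapply Rle_trans. apply sin_lip.
  replace ((theta x t - theta y t) / 2 - (theta x 0 - theta y 0) / 2) with
    ((theta x t - theta x 0) * / 2 + (- (theta y t - theta y 0)) * / 2) by field.
  eapply Rle_trans. apply Rabs_triang. rewrite !Rabs_mult, Rabs_Ropp.
  rewrite (Rabs_right (/ 2)) by lra. unfold Rdiv. lra.
Qed.

Lemma cross_final N theta a b c d la lb lc ld phi : (2 <= N)%nat -> is_solution N theta ->
  (a < N)%nat -> (b < N)%nat -> (c < N)%nat -> (d < N)%nat ->
  converges_to (theta a) la -> converges_to (theta b) lb ->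
  converges_to (theta c) lc -> converges_to (theta d) ld ->
  eq_mod2pi la phi -> eq_mod2pi lb phi -> eq_mod2pi lc (phi + PI) -> eq_mod2pi ld (phi + PI) ->
  eq_mod2pi (theta a 0) (theta b 0) \/ eq_mod2pi (theta c 0) (theta d 0).
Proof.
  intros HN Hs Ha Hb Hc Hd Ca Cb Cc Cd [m1 E1] [m2 E2] [m3 E3] [m4 E4].
  set (Ps := sin ((la - lc) / 2) * sin ((lb - ld) / 2)).
  set (Qs := sin ((la - ld) / 2) * sin ((lb - lc) / 2)).
  assert (HPQ : Ps = Qs /\ Ps * Ps = 1).
  { unfold Ps, Qs. rewrite E1, E2, E3, E4. rewrite !half_val, !sin_k_half.
    replace (- cos (IZR (m1 - m3) * PI) * - cos (IZR (m2 - m4) * PI)) with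
      (cos (IZR (m1 - m3) * PI) * cos (IZR (m2 - m4) * PI)) by ring.
    replace (- cos (IZR (m1 - m4) * PI) * - cos (IZR (m2 - m3) * PI)) with
      (cos (IZR (m1 - m4) * PI) * cos (IZR (m2 - m3) * PI)) by ring.
    split.
    - rewrite !cos_kk. replace (m1 - m4 + (m2 - m3))%Z with (m1 - m3 + (m2 - m4))%Z by ring. auto.
    - pose proof (cos_k_sq (m1 - m3)). pose proof (cos_k_sq (m2 - m4)).
      set (u := cos (IZR (m1 - m3) * PI)) in *. set (w := cos (IZR (m2 - m4) * PI)) in *.
      replace (u * w * (u * w)) with ((u * u) * (w * w)) by ring. rewrite H, H0. ring. }
  assert (Htau : forall tau, 0 < tau -> sh theta a b tau * sh theta c d tau = 0).
  { intros tau Htau.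
    set (Qt := sh theta a d tau * sh theta b c tau).
    set (Pt := sh theta a c tau * sh theta b d tau).
    assert (C1 : converges_to (fun t => sh theta a c t * sh theta b d t * Qt - sh theta a d t * sh theta b c t * Pt)
                  (Ps * Qt - Qs * Pt)).
    { apply conv_minus; apply conv_mult; try apply conv_const; apply conv_mult; apply conv_sh; auto. }
    assert (C2 : converges_to (fun t => sh theta a c t * sh theta b d t * Qt - sh theta a d t * sh theta b c t * Pt) 0).
    { intros e He. exists tau. intros t Ht. unfold Qt, Pt.
      rewrite (cross_const N theta a b c d HN Hs Ha Hb Hc Hd tau t Htau Ht).
      replace (0 - 0) with 0 by ring. rewrite Rabs_R0. auto. }
    pose proof (conv_unique _ _ _ C1 C2) as U.
    destruct HPQ as [HPQ1 HPQ2]. rewrite <- HPQ1 in U.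
    assert (Qt = Pt).
    { assert (Ps * (Qt - Pt) = 0) by (rewrite <- U; ring).
      apply Rmult_integral in H. destruct H; [rewrite H in HPQ2; lra| lra]. }
    pose proof (ptolemy (theta a tau / 2) (theta b tau / 2) (theta c tau / 2) (theta d tau / 2)).
    unfold Qt, Pt, sh in *.
    replace ((theta a tau - theta c tau) / 2) with (theta a tau / 2 - theta c tau / 2) in * by field.
    replace ((theta b tau - theta d tau) / 2) with (theta b tau / 2 - theta d tau / 2) in * by field.
    replace ((theta a tau - theta d tau) / 2) with (theta a tau / 2 - theta d tau / 2) in * by field.
    replace ((theta b tau - theta c tau) / 2) with (theta b tau / 2 - theta c tau / 2) in * by field.
    replace ((theta a tau - theta b tau) / 2) with (theta a tau / 2 - theta b tau / 2) by field.
    replace ((theta c tau - theta d tau) / 2) with (theta c tau / 2 - theta d tau / 2) by field.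
    rewrite <- H0. rewrite H. ring. }
  assert (H0 : sh theta a b 0 * sh theta c d 0 = 0).
  { destruct Hs as [_ Hrc].
    apply Rminus_diag_uniq. destruct (Req_dec (sh theta a b 0 * sh theta c d 0 - 0) 0) as [Z|Z]; auto.
    exfalso. pose proof (Rabs_no_R0 _ Z) as Z1. pose proof (Rabs_pos (sh theta a b 0 * sh theta c d 0 - 0)).
    set (eps := Rabs (sh theta a b 0 * sh theta c d 0 - 0) / 4).
    assert (He : 0 < eps) by (unfold eps; lra).
    destruct (Hrc a Ha eps He) as [da [Hda Ha']].
    destruct (Hrc b Hb eps He) as [db [Hdb Hb']].
    destruct (Hrc c Hc eps He) as [dc [Hdc Hc']].
    destruct (Hrc d Hd eps He) as [dd [Hdd Hd']].
    set (tau := Rmin (Rmin da db) (Rmin dc dd) / 2).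
    assert (Ht0 : 0 < tau).
    { unfold tau. assert (0 < Rmin (Rmin da db) (Rmin dc dd)); [|lra].
      repeat apply Rmin_glb_lt; auto. }
    assert (tau < da /\ tau < db /\ tau < dc /\ tau < dd).
    { unfold tau. pose proof (Rmin_l (Rmin da db) (Rmin dc dd)). pose proof (Rmin_r (Rmin da db) (Rmin dc dd)).
      pose proof (Rmin_l da db). pose proof (Rmin_r da db). pose proof (Rmin_l dc dd). pose proof (Rmin_r dc dd).
      lra. }
    specialize (Ha' tau ltac:(lra)). specialize (Hb' tau ltac:(lra)).
    specialize (Hc' tau ltac:(lra)). specialize (Hd' tau ltac:(lra)).
    pose proof (sh_lip theta a b tau). pose proof (sh_lip theta c d tau).
    pose proof (Htau tau Ht0) as Hz.
    assert (Rabs (sh theta a b 0 * sh theta c d 0 - 0) <=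
            Rabs (sh theta a b tau - sh theta a b 0) + Rabs (sh theta c d tau - sh theta c d 0)).
    { replace (sh theta a b 0 * sh theta c d 0 - 0) with
        (- ((sh theta a b tau - sh theta a b 0) * sh theta c d tau) +
         - (sh theta a b 0 * (sh theta c d tau - sh theta c d 0))) by (rewrite <- Hz; ring).
      eapply Rle_trans. apply Rabs_triang. rewrite !Rabs_Ropp, !Rabs_mult.
      assert (Rabs (sh theta c d tau) <= 1) by (apply Rabs_le; apply SIN_bound).
      assert (Rabs (sh theta a b 0) <= 1) by (apply Rabs_le; apply SIN_bound).
      pose proof (Rabs_pos (sh theta a b tau - sh theta a b 0)).
      pose proof (Rabs_pos (sh theta c d tau - sh theta c d 0)).
      pose proof (Rabs_pos (sh theta c d tau)). pose proof (Rabs_pos (sh theta a b 0)).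
      nra. }
    unfold eps in *. lra. }
  apply Rmult_integral in H0. destruct H0 as [H0|H0]; [left|right]; unfold sh in H0;
    destruct (sin_half0 _ H0) as [m Hm]; exists m; lra.
Qed.

Theorem theorem2p4 (N : nat) (theta : nat -> R -> R) :
  (2 <= N)%nat ->
  is_solution N theta ->
  ~ is_stationary_solution N theta ->
  exists thstar : nat -> R,
    (forall i, (i < N)%nat -> converges_to (theta i) (thstar i)) /\
    is_stationary_config N thstar /\
    (exists k : nat, is_type N k thstar) /\
    ((forall i j, (i < N)%nat -> (j < N)%nat -> i <> j ->
        ~ eq_mod2pi (theta i 0) (theta j 0)) ->
     exists k : nat, (k <= 1)%nat /\ is_type N k thstar).
Proof.
  intros HN Hs Hns.
  assert (Hconv : forall j, exists l, (j < N)%nat -> converges_to (theta j) l).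
  { intros j. destruct (lt_dec j N) as [Hj|Hj].
    - destruct (theta_conv N theta HN Hs Hns j Hj) as [l Hl]. exists l; auto.
    - exists 0. intros; lia. }
  set (ths := fun j => proj1_sig (constructive_indefinite_description _ (Hconv j))).
  assert (Hts : forall j, (j < N)%nat -> converges_to (theta j) (ths j)).
  { intros j Hj. unfold ths. destruct (constructive_indefinite_description _ (Hconv j)); simpl; auto. }
  assert (CX : converges_to (fun t => Xc N (th_at theta t)) (Xc N ths)).
  { unfold Xc. apply conv_scal.
    apply (conv_sum (fun j t => cos (theta j t)) (fun j => cos (ths j))).
    intros j Hj. apply conv_cos. apply Hts. lia. }
  assert (CY : converges_to (fun t => Yc N (th_at theta t)) (Yc N ths)).
  { unfold Yc. apply conv_scal.
    apply (conv_sum (fun j t => sin (theta j t)) (fun j => sin (ths j))).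
    intros j Hj. apply conv_sin. apply Hts. lia. }
  assert (Crho : converges_to (rho_t N theta) (rhoc N ths)).
  { unfold rho_t, rhoc. apply (conv_plus (fun t => Xc N (th_at theta t) * Xc N (th_at theta t))
      (fun t => Yc N (th_at theta t) * Yc N (th_at theta t))); apply conv_mult; auto. }
  assert (Cv : forall j, (j < N)%nat -> converges_to (fun t => vc N (th_at theta t) j) (vc N ths j)).
  { intros j Hj. unfold vc.
    apply (conv_minus (fun t => Yc N (th_at theta t) * cos (theta j t))
                      (fun t => Xc N (th_at theta t) * sin (theta j t)));
    apply conv_mult; auto. apply conv_cos; auto. apply conv_sin; auto. }
  destruct (rho_pos N theta HN Hs Hns) as [t0 [Ht0 Hr0]].
  destruct (rho_limit N theta HN Hs) as [L [HL1 HL2]].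
  assert (CL : converges_to (rho_t N theta) L).
  { intros e He. destruct (HL2 e He) as [T [HT HT']]. exists T. intros t Ht.
    specialize (HT' t Ht). specialize (HL1 t ltac:(lra)). rewrite Rabs_left1 by lra. lra. }
  assert (HrL : rhoc N ths = L) by (apply (conv_unique (rho_t N theta)); auto).
  assert (Hrpos : 0 < rhoc N ths) by (rewrite HrL; specialize (HL1 t0 Ht0); lra).
  assert (Hv0 : forall j, (j < N)%nat -> vc N ths j = 0).
  { intros j Hj. destruct (Req_dec (vc N ths j) 0) as [Z|Z]; auto. exfalso.
    set (w := vc N ths j) in *.
    assert (Hw : 0 < w * w) by (pose proof (Rsqr_pos_lt w Z); unfold Rsqr in *; lra).
    destruct (Cv j Hj (Rabs w / 2)) as [T HT].
    { pose proof (Rabs_pos w). pose proof (Rabs_no_R0 w Z). lra. }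
    destruct (D_small N theta HN Hs (w * w / 4) T) as [t [Ht1 [Ht2 Ht3]]]. lra.
    specialize (HT t Ht1). change (vc N ths j) with w in HT. pose proof (v_le_D N (th_at theta t) j Hj).
    fold (D_t N theta t) in H.
    set (v := vc N (th_at theta t) j) in *.
    assert (Rabs w <= Rabs v + Rabs (v - w)).
    { replace w with (v - (v - w)) at 1 by ring. eapply Rle_trans. apply Rabs_triang.
      rewrite Rabs_Ropp. lra. }
    assert (Rabs w / 2 < Rabs v) by lra.
    assert (Rabs w * Rabs w = w * w) by (rewrite <- Rabs_mult; apply Rabs_right; lra).
    assert (Rabs v * Rabs v = v * v) by (rewrite <- Rabs_mult; apply Rabs_right; nra).
    pose proof (Rabs_pos w). nra. }
  destruct (type_construct N ths ltac:(lia) Hv0 Hrpos) as [k [Htype Hpart2]].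
  exists ths. split; [|split; [|split]].
  - auto.
  - intros i Hi. rewrite kur_v by lia. auto.
  - exists k; auto.
  - intros Hdist. exists k. split; auto.
    destruct (le_lt_dec k 1) as [Hk|Hk]; auto. exfalso.
    destruct (Hpart2 ltac:(lia)) as (phi & a & b & c & d & Ha & Hb & Hc & Hd & Hab & Hcd & E1 & E2 & E3 & E4).
    destruct (cross_final N theta a b c d (ths a) (ths b) (ths c) (ths d) phi HN Hs Ha Hb Hc Hd
               (Hts a Ha) (Hts b Hb) (Hts c Hc) (Hts d Hd) E1 E2 E3 E4) as [X|X].
    + apply (Hdist a b Ha Hb Hab X).
    + apply (Hdist c d Hc Hd Hcd X).
Qed.
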